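(* Let $\mathcal{S}=\{S(t,s):t\ge s\}$ and $\mathcal{T}=\{T(t,s):t\ge s\}$ be continuous linear evolution processes in a Banach space $X$ admitting nonuniform exponential dichotomies with projections $\{Q^{\mathcal{S}}(t)\}$ and $\{Q^{\mathcal{T}}(t)\}$, exponents $\alpha_{\mathcal{S}}$ and $\alpha_{\mathcal{T}}$, and the same bound $K(t)\le De^{\nu|t|}$. If $\nu<\min\{\alpha_{\mathcal{T}},\alpha_{\mathcal{S}}\}$ and $$\sup_{0\le t-s\le1}\{K(t)\|T(t,s)-S(t,s)\|_{\mathcal{L}(X)}\}\le\epsilon,$$ then $$\sup_{t\in\mathbb{R}}\{K(t)^{-1}\|Q^{\mathcal{T}}(t)-Q^{\mathcal{S}}(t)\|_{\mathcal{L}(X)}\}\le\frac{e^{-\alpha_{\mathcal{S}}}+e^{-\alpha_{\mathcal{T}}}}{1-e^{-(\alpha_{\mathcal{S}}+\alpha_{\mathcal{T}})}}\,\epsilon.$$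
   Context: A continuous evolution process in a Banach space $X$ is a family $\{S(t,s): t\ge s\}$ of continuous maps $X\to X$ with $S(t,t)=Id_X$, $S(t,s)S(s,\tau)=S(t,\tau)$ for $t\ge s\ge\tau$, and $(t,s,x)\mapsto S(t,s)x$ continuous on $\{t\ge s\}\times X$; it is linear if each $S(t,s)\in\mathcal{L}(X)$. A linear evolution process admits a nonuniform exponential dichotomy if there is a family of bounded projections $\{Q(t)\}_{t\in\mathbb{R}}$ with: (i) $Q(t)S(t,s)=S(t,s)Q(s)$ for $t\ge s$; (ii) $S(t,s)|_{R(Q(s))}:R(Q(s))\to R(Q(t))$ is an isomorphism for $t\ge s$, with inverse denoted $S(s,t)$; (iii) there are a continuous $K:\mathbb{R}\to[1,\infty)$ (bound) with $K(s)\le De^{\nu|s|}$ for constants $D\ge1$, $\nu\ge0$, and $\alpha>0$ (exponent) with $\|S(t,s)(Id_X-Q(s))\|\le K(s)e^{-\alpha(t-s)}$ for $t\ge s$ and $\|S(t,s)Q(s)\|\le K(s)e^{\alpha(t-s)}$ for $t<s$. *)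

(* Defs.v *)
From HB Require Import structures.
From mathcomp Require Import all_boot all_order all_algebra.
From mathcomp Require Import all_classical all_reals all_analysis.
Set Implicit Arguments. Unset Strict Implicit. Unset Printing Implicit Defensive.
Import Order.TTheory GRing.Theory Num.Theory.
Import numFieldNormedType.Exports.
Local Open Scope classical_set_scope.
Local Open Scope ring_scope.

Section Defs.
Variables (R : realType) (X : completeNormedModType R).

Definition opnorm_le (A : X -> X) (c : R) : Prop :=
  forall x : X, `|A x| <= c * `|x|.

(* A continuous evolution process {S(t,s) : t >= s}; S is given on all of
   R x R but only its values for s <= t matter. *)
Definition evolution_process (S : R -> R -> X -> X) : Prop :=
  [/\ (forall t : R, S t t = id),
      (forall t s tau : R, tau <= s -> s <= t -> S t s \o S s tau = S t tau) &
      (forall p : R * R * X, p.1.2 <= p.1.1 ->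
         {for p, {within [set q : R * R * X | q.1.2 <= q.1.1],
            continuous (fun q : R * R * X => S q.1.1 q.1.2 q.2)}})].

Definition linear_evolution_process (S : R -> R -> X -> X) : Prop :=
  evolution_process S /\
  (forall t s : R, s <= t ->
     forall (a : R) (x y : X), S t s (a *: x + y) = a *: S t s x + S t s y).

Definition nonuniform_exp_dichotomy (S : R -> R -> X -> X) (Q : R -> X -> X)
    (K : R -> R) (D nu alpha : R) : Prop :=
  [/\
      (forall t : R, (forall (a : R) (x y : X), Q t (a *: x + y) = a *: Q t x + Q t y)
          /\ continuous (Q t) /\ (forall x, Q t (Q t x) = Q t x)),
      (forall t s : R, s <= t -> forall x, Q t (S t s x) = S t s (Q s x)),
      (forall t s : R, s <= t ->
         {in range (Q s) &, injective (S t s)} /\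
         S t s @` range (Q s) = range (Q t)),
      [/\ continuous K, (forall t, 1 <= K t), 1 <= D, 0 <= nu &
          forall t, K t <= D * expR (nu * `|t|)] &
      [/\ 0 < alpha,
          (forall t s : R, s <= t ->
             opnorm_le (fun x => S t s (x - Q s x)) (K s * expR (- alpha * (t - s)))) &
          (* for t < s, S(t,s)Q(s)x is the unique y in R(Q t) with
             S(s,t) y = Q(s) x; its norm is bounded *)
          (forall t s : R, t < s -> forall (x y : X),
             Q t y = y -> S s t y = Q s x ->
             `|y| <= K s * expR (alpha * (t - s)) * `|x|)]].

End Defs.

(* Main.v *)
Require Import Defs.
From HB Require Import structures.
From mathcomp Require Import all_boot all_order all_algebra.
From mathcomp Require Import all_classical all_reals all_analysis.
From mathcomp Require Import ring lra.
Import Order.TTheory GRing.Theory Num.Theory.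
Import numFieldNormedType.Exports.
Local Open Scope classical_set_scope.
Local Open Scope ring_scope.
Section RealAux.
Variable R : realType.

Lemma tele_aux (f : nat -> R) (B q : R) : 0 <= B -> 0 <= q -> q < 1 ->
  (forall n, f n <= B * q ^+ n + f n.+1) -> forall n, f 0 <= B / (1 - q) + f n.
Proof.
move=> B0 q0 q1 H n.
have Q0 : 0 < 1 - q by rewrite subr_gt0.
suff : f 0 <= B * (1 - q ^+ n) / (1 - q) + f n.
  move=> /le_trans; apply; rewrite lerD2r.
  apply: ler_wpM2r; first by rewrite invr_ge0 ltW.
  rewrite -[leRHS]mulr1; apply: ler_wpM2l => //.
  rewrite lerBlDr lerDl; exact: exprn_ge0.
elim: n => [|n IH]; first by rewrite expr0 subrr mulr0 mul0r add0r.
apply: (le_trans IH); have := H n.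
rewrite -(lerD2l (B * (1 - q ^+ n) / (1 - q))) => /le_trans; apply.
rewrite addrA lerD2r exprS.
have -> : B * (1 - q ^+ n) / (1 - q) + B * q ^+ n = B * (1 - q * q ^+ n) / (1 - q).
  by field; rewrite gt_eqF.
by [].
Qed.

Lemma lim_aux (A B M c : R) : 0 < c -> 0 <= M ->
  (forall n : nat, A <= B + M * expR (- c) ^+ n.+1) -> A <= B.
Proof.
move=> c0 M0 H; apply/ler_addgt0Pr => e e0.
have hb : 0 <= M / (c * e) by rewrite divr_ge0 // mulr_ge0 // ltW.
have := archi_boundP hb; set N := Num.bound _ => HN.
apply: (le_trans (H N)); rewrite lerD2l.
rewrite -expRM_natr mulNr expRN.
have E1 := expR_ge1Dx (c * N.+1%:R).
have Ep := expR_gt0 (c * N.+1%:R).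
rewrite ler_pdivrMr //.
have HN' : M < c * e * N%:R.
  by rewrite mulrC -ltr_pdivrMr // mulr_gt0.
have : c * e * N%:R <= e * (1 + c * N.+1%:R).
  have -> : e * (1 + c * N.+1%:R) = c * e * N%:R + (e + e * c) by rewrite mulrS; ring.
  by rewrite lerDl addr_ge0 ?mulr_ge0 // ltW.
move=> h; apply: (le_trans (ltW HN')); apply: (le_trans h).
by rewrite ler_wpM2l // ltW.
Qed.
End RealAux.

Section Main.
Variables (R : realType) (X : completeNormedModType R).

Lemma linB (f : X -> X) : (forall (a : R) x y, f (a *: x + y) = a *: f x + f y) ->
  forall x y, f (x - y) = f x - f y.
Proof. by move=> H x y; rewrite addrC -scaleN1r H scaleN1r addrC. Qed.

Lemma forward (S T : R -> R -> X -> X) (QS QT : R -> X -> X) (K : R -> R)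
    (D nu aS aT eps t : R) (x : X) :
  linear_evolution_process S -> linear_evolution_process T ->
  nonuniform_exp_dichotomy S QS K D nu aS -> nonuniform_exp_dichotomy T QT K D nu aT ->
  nu < aS -> 0 <= eps ->
  (forall t s, 0 <= t - s <= 1 -> opnorm_le (fun x => T t s x - S t s x) (eps / K t)) ->
  `|QS t (x - QT t x)| <= eps * K t * `|x| * expR (- aS) / (1 - expR (- (aS + aT))).
Proof.
move=> [[S0 Sc _] Slin] [[T0 Tc _] Tlin] [QSp QSi QSii [_ K1 D1 nu0 KD] [aS0 Sst Sun]]
  [QTp QTi QTii _ [aT0 Tst Tun]] nuaS eps0 Hd.
have Kp : forall s, 0 < K s by move=> s; exact: lt_le_trans (K1 s).
set w := fun n : nat => T (t + n%:R) t (x - QT t x).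
have tle : forall n : nat, t <= t + n%:R by move=> n; rewrite lerDl.
have Hc : forall n : nat, exists y, QS t y = y /\ S (t + n%:R) t y = QS (t + n%:R) (w n).
  move=> n; have [_ hs] := QSii _ _ (tle n).
  have : range (QS (t + n%:R)) (QS (t + n%:R) (w n)) by exists (w n).
  rewrite -hs => -[y [z _ <-] hy]; exists (QS t z); split => //.
  by have [_ [_ ->]] := QSp t.
have [c Hc'] := choice Hc.
have c0 : c 0%N = QS t (x - QT t x).
  have [h1 h2] := Hc' 0%N; move: h2; rewrite /w mulr0n addr0 S0 T0 /=.
  by move=> ->.
have Hw : forall n : nat, `|w n| <= K t * expR (- aT * n%:R) * `|x|.
  move=> n; have := Tst _ _ (tle n) x.
  by have -> : t + n%:R - t = n%:R by rewrite addrC addKr.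
have QSl : forall s, forall u v, QS s (u - v) = QS s u - QS s v.
  by move=> s; apply: linB; have [] := QSp s.
have tlt : forall n : nat, t < t + n.+1%:R by move=> n; rewrite ltrDl ltr0Sn.
have Hs : forall n : nat, `|c n - c n.+1| <=
    (eps * K t * `|x| * expR (- aS)) * expR (- (aS + aT)) ^+ n.
  move=> n; set s1 := t + n.+1%:R; set s0 := t + n%:R.
  have e1 : s1 = s0 + 1 by rewrite /s1 /s0 mulrS; ring.
  have s01 : s0 <= s1 by rewrite e1 lerDl.
  set d := S s1 s0 (w n) - T s1 s0 (w n).
  have y1 : QS t (c n - c n.+1) = c n - c n.+1.
    by rewrite QSl (proj1 (Hc' n)) (proj1 (Hc' n.+1)).
  have y2 : S s1 t (c n - c n.+1) = QS s1 d.
    rewrite (linB _ (Slin _ _ (tle n.+1))) (proj2 (Hc' n.+1)) /d QSl.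
    rewrite -(Sc s1 s0 t (tle n) s01) /= (proj2 (Hc' n)) QSi //.
    by rewrite /w -/s1 -(Tc s1 s0 t (tle n) s01).
  have H1 := Sun t s1 (tlt n) d _ y1 y2.
  have Hd' : `|d| <= eps / K s1 * `|w n|.
    rewrite /d distrC; apply: Hd; rewrite e1 addrAC subrr add0r; lra.
  apply: (le_trans H1).
  have E0 : 0 <= K s1 * expR (aS * (t - s1)) by rewrite mulr_ge0 ?expR_ge0 // ltW.
  apply: le_trans (ler_wpM2l E0 Hd') _.
  have -> : K s1 * expR (aS * (t - s1)) * (eps / K s1 * `|w n|) =
      expR (aS * (t - s1)) * eps * `|w n|.
    by field; rewrite gt_eqF.
  have E2 : 0 <= expR (aS * (t - s1)) * eps by rewrite mulr_ge0 ?expR_ge0.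
  apply: le_trans (ler_wpM2l E2 (Hw n)) _.
  have eE : expR (aS * (t - s1)) = expR (- aS) * expR (- aS) ^+ n.
    by rewrite -exprS -expRM_natr /s1; congr expR; ring.
  rewrite eE expRM_natr opprD expRD exprMn.
  by rewrite le_eqVlt; apply/orP; left; apply/eqP; ring.
set M := D * expR (nu * `|t|) * K t * `|x|.
have M0 : 0 <= M by rewrite /M !mulr_ge0 ?expR_ge0 // ?(ltW (Kp t)); lra.
have Ht : forall n : nat, `|c n.+1| <= M * expR (- (aS + aT - nu)) ^+ n.+1.
  move=> n; set s1 := t + n.+1%:R.
  have H1 := Sun t s1 (tlt n) (w n.+1) _ (proj1 (Hc' n.+1)) (proj2 (Hc' n.+1)).
  apply: (le_trans H1).
  have Ks : K s1 <= D * expR (nu * `|t|) * expR (nu * n.+1%:R).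
    apply: (le_trans (KD s1)); rewrite -mulrA -expRD ler_wpM2l //; first lra.
    rewrite ler_expR -mulrDr ler_wpM2l // /s1.
    by apply: (le_trans (ler_normD _ _)); rewrite normr_nat.
  have E0 : 0 <= expR (aS * (t - s1)) by exact: expR_ge0.
  apply: (le_trans (ler_wpM2r (normr_ge0 _) (ler_wpM2r E0 Ks))).
  have E1 : 0 <= D * expR (nu * `|t|) * expR (nu * n.+1%:R) * expR (aS * (t - s1)).
    by rewrite !mulr_ge0 ?expR_ge0 //; lra.
  apply: (le_trans (ler_wpM2l E1 (Hw n.+1))).
  rewrite -expRM_natr /M.
  have -> : expR (aS * (t - s1)) = expR (- aS * n.+1%:R) by congr expR; rewrite /s1; ring.
  have -> : expR (- (aS + aT - nu) * n.+1%:R) =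
     expR (nu * n.+1%:R) * expR (- aS * n.+1%:R) * expR (- aT * n.+1%:R).
    by rewrite -!expRD; congr expR; ring.
  by rewrite le_eqVlt; apply/orP; left; apply/eqP; ring.
have q0 : 0 <= expR (- (aS + aT)) by exact: expR_ge0.
have q1 : expR (- (aS + aT)) < 1 by rewrite expR_lt1; lra.
have B0 : 0 <= eps * K t * `|x| * expR (- aS).
  by rewrite !mulr_ge0 ?expR_ge0 // ltW.
have Htele := @tele_aux R (fun n => `|c n|) _ _ B0 q0 q1.
rewrite -c0; apply: (@lim_aux R _ _ M (aS + aT - nu)) => //; first lra.
move=> n; apply: le_trans (Htele _ n.+1) _; last by rewrite lerD2l.
move=> k /=; rewrite -lerBlDr; apply: le_trans (Hs k); exact: lerB_dist.
Qed.

Lemma subsub (a b c d : X) : (a - b) - (c - d) = (a - c) - (b - d).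
Proof. by rewrite !opprD addrACA. Qed.

Lemma backward (S T : R -> R -> X -> X) (QS QT : R -> X -> X) (K : R -> R)
    (D nu aS aT eps t : R) (x : X) :
  linear_evolution_process S -> linear_evolution_process T ->
  nonuniform_exp_dichotomy S QS K D nu aS -> nonuniform_exp_dichotomy T QT K D nu aT ->
  nu < aS -> 0 <= eps ->
  (forall t s, 0 <= t - s <= 1 -> opnorm_le (fun x => T t s x - S t s x) (eps / K t)) ->
  `|QS t x - QT t (QS t x)| <= eps * K t * `|x| * expR (- aS) / (1 - expR (- (aS + aT))).
Proof.
move=> [[S0 Sc _] Slin] [[T0 Tc _] Tlin] [QSp QSi QSii [_ K1 D1 nu0 KD] [aS0 Sst Sun]]
  [QTp QTi QTii _ [aT0 Tst Tun]] nuaS eps0 Hd.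
have Kp : forall s, 0 < K s by move=> s; exact: lt_le_trans (K1 s).
have QTl : forall s, forall u v, QT s (u - v) = QT s u - QT s v.
  by move=> s; apply: linB; have [] := QTp s.
set u := QS t x.
have Hg : forall s y, exists z, QS s z = z /\ S (s + 1) s z = QS (s + 1) y.
  move=> s y; have [_ hs] := QSii (s + 1) s (ler_wpDr ler01 (lexx s)).
  have : range (QS (s + 1)) (QS (s + 1) y) by exists y.
  rewrite -hs => -[v [z _ <-] hy]; exists (QS s z); split => //.
  by have [_ [_ ->]] := QSp s.
have [g Hg'] := choice (fun p : R * X => Hg p.1 p.2).
pose z := fix z (k : nat) : X := match k with 0%N => u | k'.+1 => g (t - k'.+1%:R, z k') end.
have ek : forall k : nat, t - k.+1%:R + 1 = t - k%:R by move=> k; rewrite mulrS; ring.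
have lek : forall k : nat, t - k.+1%:R <= t - k%:R by move=> k; rewrite -(ek k) lerDl.
have lek0 : forall k : nat, t - k%:R <= t by move=> k; rewrite lerBlDr lerDl.
have Z1 : forall k : nat, QS (t - k%:R) (z k) = z k.
  case=> [|k]; first by rewrite mulr0n subr0 /= /u; have [_ [_ ->]] := QSp t.
  exact: (proj1 (Hg' (t - k.+1%:R, z k))).
have Z3 : forall k : nat, S (t - k%:R) (t - k.+1%:R) (z k.+1) = z k.
  move=> k; have := proj2 (Hg' (t - k.+1%:R, z k)); rewrite /= ek => ->.
  exact: Z1.
have Z2 : forall k : nat, S t (t - k%:R) (z k) = u.
  elim=> [|k IH]; first by rewrite mulr0n subr0 S0.
  by rewrite -(Sc t (t - k%:R) _ (lek k) (lek0 k)) /= Z3.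
have Zb : forall k : nat, `|z k.+1| <= K t * expR (- aS) ^+ k.+1 * `|x|.
  move=> k; have ltk : t - k.+1%:R < t by rewrite ltrBlDr ltrDl ltr0Sn.
  have := Sun _ _ ltk x _ (Z1 k.+1) (Z2 k.+1).
  by rewrite -expRM_natr; have -> : aS * (t - k.+1%:R - t) = - aS * k.+1%:R by ring.
pose a := fun k : nat => T t (t - k%:R) (z k - QT (t - k%:R) (z k)).
have a0 : a 0%N = u - QT t u by rewrite /a mulr0n subr0 T0.
have Hs : forall k : nat, `|a k - a k.+1| <=
    (eps * K t * `|x| * expR (- aS)) * expR (- (aS + aT)) ^+ k.
  move=> k; set s0 := t - k%:R; set s1 := t - k.+1%:R.
  set v := S s0 s1 (z k.+1) - T s0 s1 (z k.+1).
  have ea : a k - a k.+1 = T t s0 (v - QT s0 v).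
    rewrite /a -/s0 -/s1 -(Tc t s0 s1 (lek k) (lek0 k)) /=.
    rewrite (linB _ (Tlin _ _ (lek k))) -(QTi _ _ (lek k)).
    rewrite -(linB _ (Tlin _ _ (lek0 k))) subsub /v -QTl Z3.
    by [].
  rewrite ea; apply: (le_trans (Tst _ _ (lek0 k) v)).
  have Hv : `|v| <= eps / K s0 * `|z k.+1|.
    rewrite /v distrC; apply: Hd; rewrite /s0 /s1 -(ek k); lra.
  have E0 : 0 <= K s0 * expR (- aT * (t - s0)) by rewrite mulr_ge0 ?expR_ge0 // ltW.
  apply: le_trans (ler_wpM2l E0 Hv) _.
  have -> : K s0 * expR (- aT * (t - s0)) * (eps / K s0 * `|z k.+1|) =
      expR (- aT * (t - s0)) * eps * `|z k.+1|.
    by field; rewrite gt_eqF.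
  have E2 : 0 <= expR (- aT * (t - s0)) * eps by rewrite mulr_ge0 ?expR_ge0.
  apply: le_trans (ler_wpM2l E2 (Zb k)) _.
  have -> : t - s0 = k%:R by rewrite /s0; ring.
  rewrite expRM_natr opprD expRD exprMn exprS.
  by rewrite le_eqVlt; apply/orP; left; apply/eqP; ring.
set M := D * expR (nu * `|t|) * K t * `|x|.
have M0 : 0 <= M by rewrite /M !mulr_ge0 ?expR_ge0 // ?(ltW (Kp t)); lra.
have Ht : forall n : nat, `|a n.+1| <= M * expR (- (aS + aT - nu)) ^+ n.+1.
  move=> n; set s1 := t - n.+1%:R.
  apply: (le_trans (Tst _ _ (lek0 n.+1) _)).
  have Ks : K s1 <= D * expR (nu * `|t|) * expR (nu * n.+1%:R).
    apply: (le_trans (KD s1)); rewrite -mulrA -expRD ler_wpM2l //; first lra.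
    rewrite ler_expR -mulrDr ler_wpM2l // /s1.
    by apply: (le_trans (ler_normB _ _)); rewrite normr_nat.
  have E0 : 0 <= expR (- aT * (t - s1)) by exact: expR_ge0.
  apply: (le_trans (ler_wpM2r (normr_ge0 _) (ler_wpM2r E0 Ks))).
  have E1 : 0 <= D * expR (nu * `|t|) * expR (nu * n.+1%:R) * expR (- aT * (t - s1)).
    by rewrite !mulr_ge0 ?expR_ge0 //; lra.
  apply: (le_trans (ler_wpM2l E1 (Zb n))).
  rewrite -!expRM_natr /M.
  have -> : t - s1 = n.+1%:R by rewrite /s1; ring.
  have -> : expR (- (aS + aT - nu) * n.+1%:R) =
     expR (nu * n.+1%:R) * expR (- aS * n.+1%:R) * expR (- aT * n.+1%:R).
    by rewrite -!expRD; congr expR; ring.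
  by rewrite le_eqVlt; apply/orP; left; apply/eqP; ring.
have q0 : 0 <= expR (- (aS + aT)) by exact: expR_ge0.
have q1 : expR (- (aS + aT)) < 1 by rewrite expR_lt1; lra.
have B0 : 0 <= eps * K t * `|x| * expR (- aS).
  by rewrite !mulr_ge0 ?expR_ge0 // ltW.
have Htele := @tele_aux R (fun n => `|a n|) _ _ B0 q0 q1.
rewrite -a0; apply: (@lim_aux R _ _ M (aS + aT - nu)) => //; first lra.
move=> n; apply: le_trans (Htele _ n.+1) _; last by rewrite lerD2l.
move=> k /=; rewrite -lerBlDr; apply: le_trans (Hs k); exact: lerB_dist.
Qed.
End Main.

Theorem mainTheorem5 (R : realType) (X : completeNormedModType R)
    (S T : R -> R -> X -> X) (QS QT : R -> X -> X) (K : R -> R)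
    (D nu alphaS alphaT eps : R) :
  linear_evolution_process S ->
  linear_evolution_process T ->
  nonuniform_exp_dichotomy S QS K D nu alphaS ->
  nonuniform_exp_dichotomy T QT K D nu alphaT ->
  nu < Num.min alphaT alphaS ->
  (forall t s : R, 0 <= t - s <= 1 ->
     opnorm_le (fun x => T t s x - S t s x) (eps / K t)) ->
  forall t : R,
    opnorm_le (fun x => QT t x - QS t x)
      (K t * ((expR (- alphaS) + expR (- alphaT)) /
              (1 - expR (- (alphaS + alphaT))) * eps)).
Proof.
move=> LS LT DS DT hnu Hd t x.
have [nuT nuS] : nu < alphaT /\ nu < alphaS.
  by move: hnu; rewrite lt_min => /andP.
have Kp : 0 < K t.
  by case: DS => _ _ _ [_ K1 _ _ _] _; exact: lt_le_trans (K1 t).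
have [eps0|epsn] := leP 0 eps; last first.
  have hn : eps / K t < 0 by rewrite pmulr_llt0 ?invr_gt0.
  have z0 : forall y : X, `|y| = 0.
    move=> y; have := Hd t t _ y; rewrite subrr lexx ler01 => /(_ isT).
    case: LS LT => [[S0 _ _] _] [[T0 _ _] _]; rewrite S0 T0 /= subrr normr0.
    move=> h; apply/eqP; rewrite eq_le normr_ge0 andbT.
    have := normr_ge0 y; move: h hn; set e := eps / K t; set n := `|y|; nra.
  by rewrite z0 z0 mulr0.
have [_ _ _ _ [aS0 _ _]] := DS.
have [_ _ _ _ [aT0 _ _]] := DT.
have QSl : forall u v, QS t (u - v) = QS t u - QS t v.
  by apply: linB; case: DS => QSp _ _ _ _; have [] := QSp t.
have -> : QT t x - QS t x = (QT t x - QS t (QT t x)) - QS t (x - QT t x).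
  by rewrite QSl opprB addrA subrK.
apply: (le_trans (ler_normB _ _)).
have H1 := @forward R X S T QS QT K D nu alphaS alphaT eps t x LS LT DS DT nuS eps0 Hd.
have Hd' : forall t s, 0 <= t - s <= 1 ->
    opnorm_le (fun x => S t s x - T t s x) (eps / K t).
  by move=> t' s' h y; rewrite distrC; exact: Hd.
have H2 := @backward R X T S QT QS K D nu alphaT alphaS eps t x LT LS DT DS nuT eps0 Hd'.
apply: (le_trans (lerD H2 H1)).
rewrite (addrC alphaT alphaS).
have q1 : expR (- (alphaS + alphaT)) < 1 by rewrite expR_lt1; lra.
have -> : eps * K t * `|x| * expR (- alphaT) / (1 - expR (- (alphaS + alphaT))) +
    eps * K t * `|x| * expR (- alphaS) / (1 - expR (- (alphaS + alphaT))) =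
    K t * ((expR (- alphaS) + expR (- alphaT)) / (1 - expR (- (alphaS + alphaT))) * eps) * `|x|.
  by field; rewrite subr_eq0 eq_sym lt_eqF.
by [].
Qed.
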